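(* Let $\alpha\in\{1/2,1\}$, $\beta\in(0,1]$, $\rho\in(0,1)$ and $\tilde\rho=\beta\rho$. The function $\Lambda\mapsto\mathbf M(\Lambda;\rho,\tilde\rho,\alpha)$ on $[0,\gamma_+]$, where $\gamma_+=\bigl(1+\sqrt{(\tilde\rho-\rho\tilde\rho)/(\rho-\rho\tilde\rho)}\bigr)^2$, is convex and attains its minimum at a unique point.
   Context: For $\gamma>0$, $\gamma_\pm=(1\pm\sqrt\gamma)^2$, $p_\gamma(t)=\frac{1}{2\pi\gamma t}\sqrt{(\gamma_+-t)(t-\gamma_-)}\mathbf 1_{[\gamma_-,\gamma_+]}(t)$ (Marčenko–Pastur density), $P_\gamma(x;k)=\int_x^{\gamma_+}t^kp_\gamma(t)dt$, and $\mathbf M(\Lambda;\rho,\tilde\rho,\alpha)=\rho+\tilde\rho-\rho\tilde\rho+(1-\tilde\rho)[\rho\Lambda^2+\alpha(1-\rho)(P_\gamma(\Lambda^2;1)-2\Lambda P_\gamma(\Lambda^2;\frac12)+\Lambda^2P_\gamma(\Lambda^2;0))]$ with $\gamma=(\tilde\rho-\rho\tilde\rho)/(\rho-\rho\tilde\rho)$. *)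

(* Defs.v *)
From Stdlib Require Import Reals.
From Coquelicot Require Import Coquelicot.
Open Scope R_scope.

Definition gplus (g : R) : R := (1 + sqrt g) ^ 2.
Definition gminus (g : R) : R := (1 - sqrt g) ^ 2.

Definition mp_density (g t : R) : R :=
  if Rle_dec (gminus g) t then
    if Rle_dec t (gplus g) then
      / (2 * PI * g * t) * sqrt ((gplus g - t) * (t - gminus g))
    else 0
  else 0.

Definition Pg (g x k : R) : R :=
  RInt (fun t => Rpower t k * mp_density g t) x (gplus g).

Definition gam (rho rt : R) : R := (rt - rho * rt) / (rho - rho * rt).

Definition Mfun (L rho rt alpha : R) : R :=
  let g := gam rho rt in
  rho + rt - rho * rt
  + (1 - rt) * (rho * L ^ 2
     + alpha * (1 - rho) * (Pg g (L ^ 2) 1 - 2 * L * Pg g (L ^ 2) (1/2)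
                            + L ^ 2 * Pg g (L ^ 2) 0)).

(* Main.v *)
Require Import Defs.
From Stdlib Require Import Classical.
From Stdlib Require Import Reals Lra Psatz.
From Coquelicot Require Import Coquelicot.
Open Scope R_scope.

Lemma gp_gm (g : R) : 0 < g -> 0 <= gminus g < gplus g /\ 1 < gplus g.
Proof.
  intros Hg. unfold gminus, gplus. pose proof (sqrt_lt_R0 g Hg).
  simpl. repeat split.
  - pose proof (Rle_0_sqr (1 - sqrt g)); unfold Rsqr in *; lra.
  - nra.
  - nra.
Qed.

Definition Q (g t : R) := (gplus g - t) * (t - gminus g).

Lemma dens_eq g t : 0 < g -> mp_density g t = / (2 * PI * g * t) * sqrt (Q g t).
Proof.
  intros Hg. destruct (gp_gm g Hg) as [[H1 H2] H3]. unfold mp_density, Q.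
  destruct (Rle_dec (gminus g) t); [destruct (Rle_dec t (gplus g))|].
  - reflexivity.
  - rewrite sqrt_neg_0; [ring|nra].
  - rewrite sqrt_neg_0; [ring|nra].
Qed.

Lemma dens_nonpos g t : 0 < g -> t <= 0 -> mp_density g t = 0.
Proof.
  intros Hg Ht. destruct (gp_gm g Hg) as [[H1 H2] H3]. rewrite dens_eq by auto.
  unfold Q; rewrite sqrt_neg_0; [ring|nra].
Qed.

Lemma dens_ge g t : 0 < g -> gplus g <= t -> mp_density g t = 0.
Proof.
  intros Hg Ht. destruct (gp_gm g Hg) as [[H1 H2] H3]. rewrite dens_eq by auto.
  unfold Q; rewrite sqrt_neg_0; [ring|nra].
Qed.

Lemma dens_nonneg g t : 0 < g -> 0 <= mp_density g t.
Proof.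
  intros Hg. destruct (Rle_dec t 0). rewrite dens_nonpos; auto; lra.
  rewrite dens_eq by auto. apply Rmult_le_pos; [|apply sqrt_pos].
  left; apply Rinv_0_lt_compat. pose proof PI_RGT_0. apply Rmult_lt_0_compat; [|lra].
  apply Rmult_lt_0_compat; lra.
Qed.

Lemma dens_cont g t : 0 < g -> t <> 0 -> continuous (mp_density g) t.
Proof.
  intros Hg Ht. apply continuous_ext with (f := fun t => / (2 * PI * g * t) * sqrt (Q g t)).
  { intros; symmetry; apply dens_eq; auto. }
  apply (continuous_mult (fun t => / (2 * PI * g * t)) (fun t => sqrt (Q g t))).
  - apply continuous_comp with (g := Rinv).
    + apply continuity_pt_filterlim. reg.
    + apply continuous_Rinv. pose proof PI_RGT_0. intro HH. rename HH into H0.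
      apply Rmult_integral in H0; destruct H0 as [H0|H0]; [|lra].
      apply Rmult_integral in H0; destruct H0 as [H0|H0]; [|lra]. lra.
  - apply continuous_sqrt_comp. apply continuity_pt_filterlim. unfold Q. reg.
Qed.
Definition pos (u : R) := (u + Rabs u) / 2.
Definition phi (L t : R) := (pos (sqrt t - L)) ^ 2.
Definition fL (g L t : R) := phi L t * mp_density g t.

Lemma pos_0 u : u <= 0 -> pos u = 0.
Proof. intros; unfold pos; rewrite Rabs_left1 by lra; lra. Qed.
Lemma pos_id u : 0 <= u -> pos u = u.
Proof. intros; unfold pos; rewrite Rabs_right by lra; lra. Qed.

Lemma sqrt_lt_L L y : 0 < L -> y < L ^ 2 -> sqrt y < L.
Proof.
  intros HL Hy. destruct (Rle_dec y 0).
  - rewrite sqrt_neg_0; lra.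
  - rewrite <- (sqrt_pow2 L) by lra. apply sqrt_lt_1_alt; lra.
Qed.

Lemma phi_cont L z : continuous (phi L) z.
Proof.
  unfold phi. apply continuous_comp with (g := fun u => pos (u - L) ^ 2).
  apply continuous_sqrt. apply continuity_pt_filterlim. unfold pos. reg.
Qed.

Lemma fL0_eq g t : 0 < g -> fL g 0 t = / (2 * PI * g) * sqrt (Q g t).
Proof.
  intros Hg. destruct (gp_gm g Hg) as [[H1 H2] H3]. unfold fL, phi.
  destruct (Rle_dec t 0).
  - rewrite dens_nonpos by auto. unfold Q; rewrite (sqrt_neg_0 (_ * _)) by nra. ring.
  - rewrite dens_eq by auto. rewrite pos_id by (pose proof (sqrt_pos t); lra).
    replace ((sqrt t - 0) ^ 2) with t by (rewrite Rminus_0_r; simpl; rewrite Rmult_1_r, sqrt_sqrt; lra).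
    field. pose proof PI_RGT_0. repeat split; lra.
Qed.

Lemma fL_cont g L z : 0 < g -> 0 <= L -> continuous (fL g L) z.
Proof.
  intros Hg HL. destruct (Req_dec z 0) as [Hz|Hz].
  - subst z. destruct (Req_dec L 0) as [HL0|HL0].
    + subst L. apply continuous_ext with (f := fun t => / (2 * PI * g) * sqrt (Q g t)).
      { intros; symmetry; apply fL0_eq; auto. }
      apply (continuous_mult (fun _ => / (2 * PI * g)) (fun t => sqrt (Q g t))).
      apply continuous_const. apply continuous_sqrt_comp. apply continuity_pt_filterlim. unfold Q. reg.
    + apply continuous_ext_loc with (g := fun _ => 0).
      2: apply continuous_const.
      assert (Hp : 0 < L ^ 2) by (simpl; nra).
      exists (mkposreal _ Hp). intros y Hy. change (Rabs (y - 0) < L ^ 2) in Hy.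
      unfold fL, phi. rewrite pos_0. simpl; ring.
      pose proof (sqrt_lt_L L y ltac:(lra)). apply Rabs_def2 in Hy. lra.
  - unfold fL. apply (continuous_mult (phi L) (mp_density g)).
    apply phi_cont. apply dens_cont; auto.
Qed.

Lemma fL_ex g L a b : 0 < g -> 0 <= L -> ex_RInt (fL g L) a b.
Proof. intros. apply (@ex_RInt_continuous R_CompleteNormedModule). intros; apply fL_cont; auto. Qed.
Definition F (g L : R) := RInt (fL g L) 0 (gplus g).

Lemma ex_cont_pos (f : R -> R) a b : 0 < a -> 0 < b -> (forall z, 0 < z -> continuous f z) ->
  ex_RInt f a b.
Proof.
  intros Ha Hb H. apply (@ex_RInt_continuous R_CompleteNormedModule).
  intros z Hz. apply H. apply Rlt_le_trans with (Rmin a b). apply Rmin_glb_lt; auto. lra.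
Qed.

Lemma bracket g L : 0 < g -> 0 <= L ->
  Pg g (L ^ 2) 1 - 2 * L * Pg g (L ^ 2) (1/2) + L ^ 2 * Pg g (L ^ 2) 0 = F g L.
Proof.
  intros Hg HL. destruct (gp_gm g Hg) as [[H1 H2] H3].
  destruct (Req_dec L 0) as [HL0|HL0].
  - subst L. replace (0 ^ 2) with 0 by ring. unfold Pg, F.
    rewrite Rmult_0_r, Rmult_0_l, Rmult_0_l. rewrite Rminus_0_r, Rplus_0_r.
    apply RInt_ext. intros t Ht. rewrite Rmin_left in Ht by lra. rewrite Rmax_right in Ht by lra.
    unfold fL, phi. rewrite Rpower_1 by lra. f_equal.
    rewrite pos_id by (pose proof (sqrt_pos t); lra). rewrite Rminus_0_r. simpl.
    rewrite Rmult_1_r, sqrt_sqrt; lra.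
  - set (a := L ^ 2). assert (Ha : 0 < a) by (unfold a; simpl; nra).
    assert (Hc : forall z, 0 < z -> continuous (mp_density g) z) by (intros; apply dens_cont; auto; lra).
    assert (E1 : Pg g a 1 = RInt (fun t => t * mp_density g t) a (gplus g)).
    { apply RInt_ext. intros t Ht. rewrite Rpower_1; auto.
      apply Rlt_trans with (Rmin a (gplus g)); [apply Rmin_glb_lt|]; lra. }
    assert (E2 : Pg g a (1/2) = RInt (fun t => sqrt t * mp_density g t) a (gplus g)).
    { apply RInt_ext. intros t Ht. replace (1/2) with (/2) by field. rewrite Rpower_sqrt; auto.
      apply Rlt_trans with (Rmin a (gplus g)); [apply Rmin_glb_lt|]; lra. }
    assert (E3 : Pg g a 0 = RInt (fun t => mp_density g t) a (gplus g)).
    { apply RInt_ext. intros t Ht. rewrite Rpower_O. apply Rmult_1_l.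
      apply Rlt_trans with (Rmin a (gplus g)); [apply Rmin_glb_lt|]; lra. }
    assert (X1 : ex_RInt (fun t => t * mp_density g t) a (gplus g)).
    { apply ex_cont_pos; try lra. intros z Hz.
      apply (continuous_mult (fun t => t) (mp_density g)). apply continuous_id. auto. }
    assert (X2 : ex_RInt (fun t => sqrt t * mp_density g t) a (gplus g)).
    { apply ex_cont_pos; try lra. intros z Hz.
      apply (continuous_mult sqrt (mp_density g)). apply continuous_sqrt. auto. }
    assert (X3 : ex_RInt (fun t => mp_density g t) a (gplus g)).
    { apply ex_cont_pos; try lra. intros z Hz. auto. }
    rewrite E1, E2, E3.
    assert (K := is_RInt_plus _ _ _ _ _ _
              (is_RInt_minus _ _ _ _ _ _ (RInt_correct _ _ _ X1)
                 (is_RInt_scal _ _ _ (2 * L) _ (RInt_correct _ _ _ X2)))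
              (is_RInt_scal _ _ _ a _ (RInt_correct _ _ _ X3))).
    apply is_RInt_unique in K.
    unfold minus, plus, opp, scal in K; simpl in K. unfold mult in K; simpl in K.
    unfold Rminus; rewrite <- K. unfold F.
    rewrite <- (RInt_Chasles (fL g L) 0 a (gplus g)) by (apply fL_ex; auto).
    replace (RInt (fL g L) 0 a) with 0.
    2: { rewrite (RInt_ext _ (fun _ => 0)). rewrite RInt_const. unfold scal; simpl; unfold mult; simpl; ring.
         intros t Ht. rewrite Rmin_left in Ht by lra. rewrite Rmax_right in Ht by lra.
         unfold fL, phi. rewrite pos_0. simpl; ring. pose proof (sqrt_lt_L L t). unfold a in Ht. lra. }
    unfold plus; simpl. rewrite Rplus_0_l.
    apply RInt_ext. intros t Ht.
    assert (Ht0 : 0 < t) by (apply Rlt_trans with (Rmin a (gplus g)); [apply Rmin_glb_lt|]; lra).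
    match goal with |- ?x = ?y => change (@eq R x y) end.
    unfold fL, phi. destruct (Rle_dec t a) as [r|n].
    + assert (gplus g < t).
      { destruct (Rle_dec a (gplus g)). rewrite Rmin_left in Ht; lra. rewrite Rmin_right in Ht; lra. }
      rewrite dens_ge by (auto; lra). ring.
    + assert (L < sqrt t).
      { rewrite <- (sqrt_pow2 L) by lra. apply sqrt_lt_1_alt. fold a. lra. }
      rewrite pos_id by lra. simpl.
      replace ((sqrt t - L) * ((sqrt t - L) * 1)) with (sqrt t * sqrt t - 2 * L * sqrt t + L * L) by ring.
      rewrite sqrt_sqrt by lra. unfold a; simpl. ring.
Qed.
Lemma pos_ge u : u <= pos u /\ 0 <= pos u.
Proof. unfold pos. pose proof (Rle_abs u). pose proof (Rle_abs (-u)). rewrite Rabs_Ropp in H0. lra. Qed.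

Lemma pos_conv a x y l : 0 <= l <= 1 ->
  pos (a - (l * x + (1 - l) * y)) <= l * pos (a - x) + (1 - l) * pos (a - y).
Proof.
  intros Hl. destruct (pos_ge (a - x)) as [A1 A2]. destruct (pos_ge (a - y)) as [B1 B2].
  destruct (Rle_dec (a - (l * x + (1 - l) * y)) 0).
  - rewrite pos_0 by auto. nra.
  - rewrite pos_id by lra. nra.
Qed.

Lemma phi_conv L1 L2 l t : 0 <= l <= 1 ->
  phi (l * L1 + (1 - l) * L2) t <= l * phi L1 t + (1 - l) * phi L2 t.
Proof.
  intros Hl. unfold phi. pose proof (pos_conv (sqrt t) L1 L2 l Hl).
  destruct (pos_ge (sqrt t - L1)) as [A1 A2]. destruct (pos_ge (sqrt t - L2)) as [B1 B2].
  destruct (pos_ge (sqrt t - (l * L1 + (1 - l) * L2))) as [C1 C2].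
  set (u := pos (sqrt t - L1)) in *. set (v := pos (sqrt t - L2)) in *.
  set (w := pos (sqrt t - (l * L1 + (1 - l) * L2))) in *. simpl.
  assert (w * w <= (l * u + (1 - l) * v) * (l * u + (1 - l) * v)) by (apply Rmult_le_compat; lra).
  assert (0 <= l * (1 - l) * ((u - v) * (u - v))).
  { apply Rmult_le_pos. nra. apply Rle_0_sqr. }
  assert (E : (l * u + (1 - l) * v) * (l * u + (1 - l) * v) =
    l * (u * (u * 1)) + (1 - l) * (v * (v * 1)) - l * (1 - l) * ((u - v) * (u - v))) by ring.
  lra.
Qed.

Lemma phi_lip a x y : 0 <= a -> 0 <= x -> 0 <= y ->
  Rabs (pos (a - x) ^ 2 - pos (a - y) ^ 2) <= 2 * a * Rabs (x - y).
Proof.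
  intros Ha Hx Hy. apply Rabs_le.
  destruct (Rle_dec (a - x) 0) as [H1|H1]; [rewrite (pos_0 (a - x)) by auto|rewrite (pos_id (a-x)) by lra];
  (destruct (Rle_dec (a - y) 0) as [H2|H2]; [rewrite (pos_0 (a - y)) by auto|rewrite (pos_id (a-y)) by lra]);
  (destruct (Rle_dec x y); [rewrite Rabs_left1 by lra|rewrite Rabs_right by lra]); simpl; split; nra.
Qed.

Lemma conv_F g x y l : 0 < g -> 0 <= x -> 0 <= y -> 0 <= l <= 1 ->
  F g (l * x + (1 - l) * y) <= l * F g x + (1 - l) * F g y.
Proof.
  intros Hg Hx Hy Hl. destruct (gp_gm g Hg) as [[H1 H2] H3].
  assert (Hz : 0 <= l * x + (1 - l) * y) by nra.
  assert (K := is_RInt_plus _ _ _ _ _ _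
              (is_RInt_scal _ _ _ l _ (RInt_correct _ _ _ (fL_ex g x 0 (gplus g) Hg Hx)))
              (is_RInt_scal _ _ _ (1 - l) _ (RInt_correct _ _ _ (fL_ex g y 0 (gplus g) Hg Hy)))).
  unfold F.
  assert (EQ : RInt (fun t => l * fL g x t + (1-l) * fL g y t) 0 (gplus g) =
     l * RInt (fL g x) 0 (gplus g) + (1 - l) * RInt (fL g y) 0 (gplus g)) by (apply is_RInt_unique; exact K).
  rewrite <- EQ.
  apply RInt_le. lra. apply fL_ex; auto. eexists; exact K.
  intros t Ht. unfold fL.
  pose proof (phi_conv x y l t Hl). pose proof (dens_nonneg g t Hg). nra.
Qed.

Lemma sqrt_dens_bound g t : 0 < g -> 0 <= t <= gplus g ->
  sqrt t * mp_density g t <= / (2 * PI * g) * sqrt (gplus g).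
Proof.
  intros Hg Ht. destruct (gp_gm g Hg) as [[H1 H2] H3]. pose proof PI_RGT_0.
  assert (HC : 0 < / (2 * PI * g)) by (apply Rinv_0_lt_compat; nra).
  destruct (Req_dec t 0) as [E|E].
  - subst. rewrite dens_nonpos by (auto; lra). rewrite Rmult_0_r. apply Rmult_le_pos; [lra|apply sqrt_pos].
  - rewrite dens_eq by auto.
    assert (St : 0 < sqrt t) by (apply sqrt_lt_R0; lra).
    assert (Hq : sqrt (Q g t) <= sqrt (gplus g) * sqrt t).
    { rewrite <- sqrt_mult by lra. apply sqrt_le_1_alt. unfold Q. nra. }
    replace (sqrt t * (/ (2 * PI * g * t) * sqrt (Q g t))) with
        (/ (2 * PI * g) * (sqrt (Q g t) / sqrt t)).
    2: { assert (Et : t = sqrt t * sqrt t) by (symmetry; apply sqrt_sqrt; lra).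
         set (q := sqrt (Q g t)). set (s := sqrt t) in *. rewrite Et. field. repeat split; lra. }
    apply Rmult_le_compat_l. lra.
    apply (Rmult_le_reg_r (sqrt t)). auto. unfold Rdiv. rewrite Rmult_assoc, Rinv_l by lra. lra.
Qed.

Lemma lip_F g x y : 0 < g -> 0 <= x -> 0 <= y ->
  Rabs (F g x - F g y) <= gplus g * (2 * Rabs (x - y) * (/ (2 * PI * g) * sqrt (gplus g))).
Proof.
  intros Hg Hx Hy. destruct (gp_gm g Hg) as [[H1 H2] H3].
  unfold F.
  assert (K := is_RInt_minus _ _ _ _ _ _
              (RInt_correct _ _ _ (fL_ex g x 0 (gplus g) Hg Hx))
              (RInt_correct _ _ _ (fL_ex g y 0 (gplus g) Hg Hy))).
  apply is_RInt_unique in K. unfold minus, plus, opp in K; simpl in K.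
  change (RInt (fL g x) 0 (gplus g) - RInt (fL g y) 0 (gplus g)) with
    (RInt (fL g x) 0 (gplus g) + - RInt (fL g y) 0 (gplus g)).
  rewrite <- K.
  replace (gplus g * (2 * Rabs (x - y) * (/ (2 * PI * g) * sqrt (gplus g)))) with
   ((gplus g - 0) * (2 * Rabs (x - y) * (/ (2 * PI * g) * sqrt (gplus g)))) by ring.
  apply abs_RInt_le_const. lra.
  { apply (@ex_RInt_minus R_NormedModule (fL g x) (fL g y)); apply fL_ex; auto. }
  intros t Ht. unfold fL, phi.
  replace (pos (sqrt t - x) ^ 2 * mp_density g t + - (pos (sqrt t - y) ^ 2 * mp_density g t))
    with ((pos (sqrt t - x) ^ 2 - pos (sqrt t - y) ^ 2) * mp_density g t) by ring.
  rewrite Rabs_mult, (Rabs_right (mp_density g t)) by (apply Rle_ge, dens_nonneg; auto).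
  pose proof (phi_lip (sqrt t) x y (sqrt_pos t) Hx Hy).
  pose proof (sqrt_dens_bound g t Hg Ht). pose proof (dens_nonneg g t Hg).
  pose proof (Rabs_pos (x - y)).
  apply Rle_trans with (2 * sqrt t * Rabs (x - y) * mp_density g t).
  apply Rmult_le_compat_r; auto. nra.
Qed.
Lemma cont_lip (G : R -> R) (K0 : R) : 0 <= K0 ->
  (forall x y, Rabs (G x - G y) <= K0 * Rabs (x - y)) -> forall x0, continuity_pt G x0.
Proof.
  intros HK HG x0. unfold continuity_pt, continue_in, limit1_in, limit_in.
  intros eps Heps. exists (eps / (K0 + 1)). split.
  { apply Rdiv_lt_0_compat; lra. }
  intros x [_ Hx]. simpl in *. unfold R_dist in *.
  apply Rle_lt_trans with (K0 * Rabs (x - x0)). apply HG.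
  apply Rle_lt_trans with ((K0 + 1) * Rabs (x - x0)). pose proof (Rabs_pos (x - x0)). nra.
  apply Rlt_le_trans with ((K0 + 1) * (eps / (K0 + 1))).
  apply Rmult_lt_compat_l; lra. right; field; lra.
Qed.

Definition FA (g L : R) := F g (Rabs L).

Theorem lemma9 (alpha beta rho : R)
  (Halpha : alpha = 1/2 \/ alpha = 1)
  (Hbeta : 0 < beta <= 1)
  (Hrho : 0 < rho < 1) :
  let rt := beta * rho in
  let gp := gplus (gam rho rt) in
  (* convexity on [0, gamma_+] *)
  (forall x y l, 0 <= x <= gp -> 0 <= y <= gp -> 0 <= l <= 1 ->
     Mfun (l * x + (1 - l) * y) rho rt alpha
       <= l * Mfun x rho rt alpha + (1 - l) * Mfun y rho rt alpha)
  /\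
  (* unique minimiser on [0, gamma_+] *)
  (exists x, (0 <= x <= gp /\
              forall y, 0 <= y <= gp -> Mfun x rho rt alpha <= Mfun y rho rt alpha)
     /\ forall z, (0 <= z <= gp /\
                   forall y, 0 <= y <= gp -> Mfun z rho rt alpha <= Mfun y rho rt alpha)
                  -> z = x).
Proof.
  intros rt gp.
  assert (Hrt : 0 < rt < 1) by (unfold rt; split; nra).
  set (g := gam rho rt) in gp.
  assert (Hg : 0 < g).
  { unfold g, gam. replace (rt - rho * rt) with (rt * (1 - rho)) by ring.
    replace (rho - rho * rt) with (rho * (1 - rt)) by ring.
    apply Rdiv_lt_0_compat; apply Rmult_lt_0_compat; lra. }
  destruct (gp_gm g Hg) as [[H1 H2] H3]. assert (H3p : 1 < gp) by exact H3.
  assert (HA : 0 < alpha) by (destruct Halpha; lra).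
  set (c := rho + rt - rho * rt). set (A := 1 - rt). set (B := alpha * (1 - rho)).
  assert (HAp : 0 < A) by (unfold A; lra). assert (HBp : 0 < B) by (unfold B; nra).
  assert (Meq : forall L, 0 <= L -> Mfun L rho rt alpha = c + A * (rho * L ^ 2 + B * F g L)).
  { intros L HL. unfold Mfun. cbv zeta. fold g. rewrite (bracket g L Hg HL).
    unfold c, A, B. ring. }
  assert (Conv : forall x y l, 0 <= x -> 0 <= y -> 0 <= l <= 1 ->
     Mfun (l * x + (1 - l) * y) rho rt alpha
       <= l * Mfun x rho rt alpha + (1 - l) * Mfun y rho rt alpha
          - A * rho * (l * (1 - l) * ((x - y) * (x - y)))).
  { intros x y l Hx Hy Hl. assert (Hz : 0 <= l * x + (1 - l) * y) by nra.
    rewrite !Meq by auto. pose proof (conv_F g x y l Hg Hx Hy Hl).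
    assert (E : (l * x + (1 - l) * y) ^ 2 = l * x ^ 2 + (1 - l) * y ^ 2 - l * (1 - l) * ((x - y) * (x - y))) by ring.
    rewrite E.
    assert (A * B * F g (l * x + (1 - l) * y) <= A * B * (l * F g x + (1 - l) * F g y)).
    { apply Rmult_le_compat_l. nra. auto. }
    nra. }
  split.
  { intros x y l Hx Hy Hl. pose proof (Conv x y l ltac:(lra) ltac:(lra) Hl).
    assert (0 <= A * rho * (l * (1 - l) * ((x - y) * (x - y)))).
    { apply Rmult_le_pos. nra. apply Rmult_le_pos. nra. apply Rle_0_sqr. }
    lra. }
  set (N := fun L => c + A * (rho * L ^ 2 + B * FA g L)).
  set (K0 := gplus g * (2 * (/ (2 * PI * g) * sqrt (gplus g)))).
  assert (HK0 : 0 <= K0).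
  { unfold K0. pose proof PI_RGT_0. apply Rmult_le_pos. lra. apply Rmult_le_pos. lra.
    apply Rmult_le_pos. left; apply Rinv_0_lt_compat; nra. apply sqrt_pos. }
  assert (CG : forall x0, continuity_pt (FA g) x0).
  { apply (cont_lip _ K0 HK0). intros x y. unfold FA.
    eapply Rle_trans. apply lip_F; auto; apply Rabs_pos.
    pose proof (Rabs_triang_inv2 x y). unfold K0.
    pose proof PI_RGT_0.
    assert (0 <= / (2 * PI * g) * sqrt (gplus g)).
    { apply Rmult_le_pos. left; apply Rinv_0_lt_compat; nra. apply sqrt_pos. }
    set (k := / (2 * PI * g) * sqrt (gplus g)) in *.
    assert (0 <= gplus g * k * (Rabs (x - y) - Rabs (Rabs x - Rabs y))).
    { apply Rmult_le_pos; [apply Rmult_le_pos; lra|lra]. }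
    nra. }
  assert (CN : forall x0, continuity_pt N x0).
  { intros x0. unfold N. pose proof (CG x0). reg. }
  destruct (continuity_ab_min N 0 gp ltac:(lra) (fun c _ => CN c)) as [mx [Hmin Hmx]].
  assert (NM : forall L, 0 <= L -> N L = Mfun L rho rt alpha).
  { intros L HL. rewrite Meq by auto. unfold N, FA. rewrite Rabs_right by lra. reflexivity. }
  exists mx. split.
  { split; auto. intros y Hy. rewrite <- !NM by lra. apply Hmin; auto. }
  intros z [Hz Hzmin]. apply NNPP. intro Hne.
  assert (Hmz : 0 <= mx). lra.
  pose proof (Conv z mx (1/2) ltac:(lra) ltac:(lra) ltac:(lra)).
  assert (Hmid : 0 <= 1/2 * z + (1 - 1/2) * mx <= gp) by lra.
  pose proof (Hzmin mx Hmx) as Q1. pose proof (Hmin z Hz) as Q2. rewrite !NM in Q2 by lra.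
  pose proof (Hzmin _ Hmid) as Q3.
  assert (0 < A * rho * (1 / 2 * (1 - 1 / 2) * ((z - mx) * (z - mx)))).
  { apply Rmult_lt_0_compat. nra. apply Rmult_lt_0_compat. lra.
    assert (z - mx <> 0) by lra. nra. }
  lra.
Qed.
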